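(* Let $A$, $b$, $H$, $w_0$, $x_0=A^Tw_0$, and the sequences $r_k=b-Ax_k$, $x_k$ be as in the first-order CTA iteration in the context, and assume $Hr_k\ne0$ for all $k\ge0$ (so the sequences are infinite). (1) If $\operatorname{rank}(A)=m$, then $x_k$ converges to a solution of $Ax=b$; if $H=AA^T$, it converges to the minimum-norm solution of $Ax=b$. (2) $A^Tr_k\to0$. (3) If $Ax=b$ is solvable and $\{x_k\}$ is bounded, then $r_k\to0$ and every accumulation point of $\{x_k\}$ solves $Ax=b$. (4) If $Ax=b$ is solvable and $H=AA^T$, then for every $k$ there is $w_k\in\mathbb{R}^m$ with $x_k=A^Tw_k$; if $\{w_k\}$ is bounded, then $x_k$ converges to the minimum-norm solution $x_*$ of $Ax=b$.
   Context: $A\in\mathbb{R}^{m\times n}$, $b\in\mathbb{R}^m$; $H=AA^T$, or $H=A$ when $A$ is square symmetric positive semidefinite. For $r$ with $Hr\ne0$, $\alpha_{1,1}(r)=r^THr/r^TH^2r$ and $F_1(r)=r-\alpha_{1,1}(r)Hr$. Given $w_0\in\mathbb{R}^m$: $x_0=A^Tw_0$, $r_0=b-Ax_0$, $r_k=F_1(r_{k-1})$, and $x_k=x_{k-1}+\alpha_{1,1}(r_{k-1})r_{k-1}$ if $H=A$, $x_k=x_{k-1}+\alpha_{1,1}(r_{k-1})A^Tr_{k-1}$ if $H=AA^T$ (so $r_k=b-Ax_k$). *)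

(* Defs.v *)
From HB Require Import structures.
From mathcomp Require Import all_boot all_order all_algebra.
From mathcomp Require Import all_classical all_reals all_analysis.
Set Implicit Arguments. Unset Strict Implicit. Unset Printing Implicit Defensive.
Import Order.TTheory GRing.Theory Num.Theory.
Import numFieldNormedType.Exports.
Local Open Scope ring_scope.

Definition alpha11 (R : realType) (m : nat) (H : 'M[R]_m) (r : 'cV[R]_m) : R :=
  (r^T *m H *m r) 0 0 / (r^T *m (H *m H) *m r) 0 0.

Definition F1 (R : realType) (m : nat) (H : 'M[R]_m) (r : 'cV[R]_m) : 'cV[R]_m :=
  r - alpha11 H r *: (H *m r).

(* Generic first-order CTA iteration: the pair (x_k, r_k), with
   x_k = x_{k-1} + alpha_{1,1}(r_{k-1}) D r_{k-1},  r_k = F_1(r_{k-1}),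
   where D = A^T when H = A A^T and D = I when H = A (square case). *)
Fixpoint cta (R : realType) (m n : nat) (H : 'M[R]_m) (D : 'M[R]_(n, m))
    (x0 : 'cV[R]_n) (r0 : 'cV[R]_m) (k : nat) : 'cV[R]_n * 'cV[R]_m :=
  match k with
  | 0 => (x0, r0)
  | k'.+1 => let: (x, r) := cta H D x0 r0 k' in
             (x + alpha11 H r *: (D *m r), F1 H r)
  end.

Definition cta_AAT (R : realType) (m n : nat) (A : 'M[R]_(m, n)) (b w0 : 'cV[R]_m)
    (k : nat) : 'cV[R]_n * 'cV[R]_m :=
  cta (A *m A^T) A^T (A^T *m w0) (b - A *m (A^T *m w0)) k.

Definition cta_A (R : realType) (n : nat) (A : 'M[R]_n) (b w0 : 'cV[R]_n)
    (k : nat) : 'cV[R]_n * 'cV[R]_n :=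
  cta A 1%:M (A^T *m w0) (b - A *m (A^T *m w0)) k.

Definition psd_sym (R : realType) (n : nat) (A : 'M[R]_n) : Prop :=
  A^T = A /\ forall v : 'cV[R]_n, 0 <= (v^T *m A *m v) 0 0.

Definition eucl2 (R : realType) (n : nat) (v : 'cV[R]_n) : R :=
  \sum_(i < n) v i 0 ^+ 2.

Definition is_min_norm_sol (R : realType) (m n : nat) (A : 'M[R]_(m, n))
    (b : 'cV[R]_m) (xs : 'cV[R]_n) : Prop :=
  A *m xs = b /\ forall y, A *m y = b -> eucl2 xs <= eucl2 y.

Definition bounded_seq (R : realType) (p q : nat) (u : nat -> 'M[R]_(p, q)) : Prop :=
  exists M : R, forall k, `|u k| <= M.

(* Main.v *)
Require Import Defs.
From HB Require Import structures.
From mathcomp Require Import all_boot all_order all_algebra.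
From mathcomp Require Import all_classical all_reals all_analysis.
From mathcomp Require Import ring lra.
Import Order.TTheory GRing.Theory Num.Theory.
Import numFieldNormedType.Exports.
Local Open Scope ring_scope.
Local Open Scope classical_set_scope.
Section Aux.
Context {R : realType}.

Lemma mxn_entry {p q : nat} (M : 'M[R]_(p, q)) i j : `|M i j| <= `|M|.
Proof.
rewrite [leRHS]/Num.Def.normr /= mx_normrE.
by apply/bigmax_geP; right => /=; exists (i, j).
Qed.

Lemma mxn_le {p q : nat} (M : 'M[R]_(p, q)) (c : R) :
  0 <= c -> (forall i j, `|M i j| <= c) -> `|M| <= c.
Proof.
move=> c0 H; rewrite [leLHS]/Num.Def.normr /= mx_normrE.
by apply: bigmax_le => // -[i j] _; apply: H.
Qed.

Lemma mxn_mul {p q s : nat} (M : 'M[R]_(p, q)) (N : 'M[R]_(q, s)) :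
  `|M *m N| <= q%:R * `|M| * `|N|.
Proof.
apply: mxn_le; first by rewrite !mulr_ge0.
move=> i j; rewrite mxE.
apply: le_trans (ler_norm_sum _ _ _) _.
have -> : q%:R * `|M| * `|N| = \sum_(k < q) `|M| * `|N|.
  by rewrite sumr_const card_ord -mulrA mulr_natl.
apply: ler_sum => k _; rewrite normrM; apply: ler_pM => //; exact: mxn_entry.
Qed.

End Aux.
Section Dot.
Context {R : realType}.
Context {m : nat}.
Implicit Types u v w : 'cV[R]_m.

Definition dot u v : R := (u^T *m v) 0 0.

Lemma dotE u v : dot u v = \sum_i u i 0 * v i 0.
Proof. by rewrite /dot mxE; apply: eq_bigr => i _; rewrite mxE. Qed.

Lemma dotC u v : dot u v = dot v u.
Proof. by rewrite !dotE; apply: eq_bigr => i _; rewrite mulrC. Qed.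

Lemma dotDl u v w : dot (u + v) w = dot u w + dot v w.
Proof. by rewrite !dotE -big_split; apply: eq_bigr => i _; rewrite !mxE mulrDl. Qed.

Lemma dotNl u w : dot (- u) w = - dot u w.
Proof. by rewrite !dotE -sumrN; apply: eq_bigr => i _; rewrite !mxE mulNr. Qed.

Lemma dotBl u v w : dot (u - v) w = dot u w - dot v w.
Proof. by rewrite dotDl dotNl. Qed.

Lemma dotZl (a : R) u w : dot (a *: u) w = a * dot u w.
Proof. by rewrite !dotE mulr_sumr; apply: eq_bigr => i _; rewrite !mxE mulrA. Qed.

Lemma dotDr u v w : dot w (u + v) = dot w u + dot w v.
Proof. by rewrite dotC dotDl dotC (dotC v). Qed.
Lemma dotBr u v w : dot w (u - v) = dot w u - dot w v.
Proof. by rewrite dotC dotBl dotC (dotC v). Qed.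
Lemma dotZr (a : R) u w : dot w (a *: u) = a * dot w u.
Proof. by rewrite dotC dotZl dotC. Qed.
Lemma dot0r u : dot u 0 = 0.
Proof. by rewrite dotE big1 // => i _; rewrite mxE mulr0. Qed.

Lemma dot_ge0 u : 0 <= dot u u.
Proof. by rewrite dotE sumr_ge0 // => i _; rewrite -expr2 sqr_ge0. Qed.

Lemma dot_eq0 u : dot u u = 0 -> u = 0.
Proof.
rewrite dotE => /eqP; rewrite psumr_eq0; last by move=> i _; rewrite -expr2 sqr_ge0.
move=> /allP H; apply/matrixP => i j; rewrite (ord1 j) mxE.
have := H i (mem_index_enum _); rewrite /= -expr2 sqrf_eq0 => /eqP //.
Qed.

Lemma entry_le_sqrt u i : `|u i 0| <= Num.sqrt (dot u u).
Proof.
rewrite -sqrtr_sqr ler_sqrt ?dot_ge0 // dotE.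
rewrite (bigD1 i) //= -[leLHS]addr0 -expr2 lerD2l sumr_ge0 // => k _.
by rewrite -expr2 sqr_ge0.
Qed.

Lemma normsq_le_dot u : `|u| ^+ 2 <= dot u u.
Proof.
have h : `|u| <= Num.sqrt (dot u u).
  apply: mxn_le => // i j; rewrite (ord1 j); exact: entry_le_sqrt.
by rewrite -[leRHS](sqr_sqrtr (dot_ge0 u)) lerXn2r // ?nnegrE.
Qed.

Lemma dot_bound u v : `|dot u v| <= m%:R * `|u| * `|v|.
Proof.
rewrite /dot; apply: le_trans (mxn_entry (u^T *m v) 0 0) _.
apply: le_trans (mxn_mul _ _) _.
rewrite ler_wpM2r // ler_wpM2l //; apply: mxn_le => // i j.
by rewrite mxE; apply: mxn_entry.
Qed.

Lemma dot_le u v : dot u v <= m%:R * `|u| * `|v|.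
Proof. apply: le_trans (dot_bound u v); exact: ler_norm. Qed.

End Dot.

Lemma dot_mx (R : realType) (p q : nat) (M : 'M[R]_(p, q)) (u : 'cV[R]_q) (v : 'cV[R]_p) :
  dot (M *m u) v = dot u (M^T *m v).
Proof. by rewrite /dot trmx_mul mulmxA. Qed.
Section Cvg.
Context {R : realType}.

Lemma cvg0_le {V : normedModType R} (f : nat -> V) (g : nat -> R) (C : R) :
  (forall k, `|f k| <= C * g k) -> g @ \oo --> 0 -> f @ \oo --> 0.
Proof.
move=> H hg; apply: norm_cvg0.
apply: (@squeeze_cvgr _ _ _ _ (fun=> 0) (fun k => C * g k)).
- by near=> k; rewrite normr_ge0 H.
- exact: cvg_cst.
- by rewrite -(mulr0 C); apply: cvgM => //; exact: cvg_cst.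
Unshelve. all: end_near.
Qed.

Lemma cvg_sq0 (f : nat -> R) :
  (forall k, 0 <= f k) -> (fun k => f k ^+ 2) @ \oo --> (0:R) -> f @ \oo --> (0:R).
Proof.
move=> f0 /cvgrPdist_lt H; apply/cvgrPdist_lt => e e0.
have := H (e ^+ 2) (exprn_gt0 _ e0).
apply: filterS => k; rewrite !sub0r !normrN !ger0_norm ?sqr_ge0 ?f0 //.
move=> h; have := f0 k; rewrite !expr2 in h *; nra.
Qed.

Lemma decr_diff0 (s : nat -> R) :
  (forall k, s k.+1 <= s k) -> (forall k, 0 <= s k) ->
  (fun k => s k - s k.+1) @ \oo --> (0:R).
Proof.
move=> dec pos.
have nd : nonincreasing_seq s.
  by apply/nonincreasing_seqP => k; exact: dec.
have lb : has_lbound (range s) by exists 0 => _ [k _ <-]; exact: pos.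
have hs := nonincreasing_cvgn nd lb.
rewrite -(subrr (inf (s @` setT))); apply: cvgB => //.
by rewrite cvg_shiftS.
Qed.

End Cvg.
Lemma cs_scalar {R : realType} (a b c : R) :
  (forall t, 0 <= a - 2 * b * t + c * t ^+ 2) -> 0 <= c -> b ^+ 2 <= a * c.
Proof.
move=> H c0; have [c0'|cgt0] := eqVneq c 0.
  subst c; rewrite mulr0.
  have [b0|bn0] := eqVneq b 0; first by rewrite b0 expr0n.
  have := H ((a + 1) / (2 * b)).
  have -> : a - 2 * b * ((a + 1) / (2 * b)) + 0 * ((a + 1) / (2 * b)) ^+ 2 = -1.
    by field.
  by rewrite ler0N1.
have cpos : 0 < c by rewrite lt_def cgt0 c0.
have := H (b / c).
have -> : a - 2 * b * (b / c) + c * (b / c) ^+ 2 = (a * c - b ^+ 2) / c by field.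
move=> h; rewrite -subr_ge0.
have -> : a * c - b ^+ 2 = ((a * c - b ^+ 2) / c) * c by field.
exact: mulr_ge0 h c0.
Qed.

Section Sym.
Context {R : realType} {m : nat}.
Variable H : 'M[R]_m.
Hypothesis Hsym : H^T = H.
Hypothesis Hpsd : forall v : 'cV[R]_m, 0 <= dot v (H *m v).

Lemma dot_symH (u v : 'cV[R]_m) : dot v (H *m u) = dot u (H *m v).
Proof. by rewrite dotC dot_mx Hsym. Qed.

Lemma dot_quad (u v : 'cV[R]_m) (t : R) :
  dot (u - t *: v) (H *m (u - t *: v)) =
  dot u (H *m u) - 2 * t * dot u (H *m v) + t ^+ 2 * dot v (H *m v).
Proof.
rewrite mulmxBr -scalemxAr dotBl !dotBr !dotZl !dotZr dot_symH; ring.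
Qed.

Definition K0 : R := m%:R * m%:R * `|H|.

Lemma K0_ge0 : 0 <= K0.
Proof. by rewrite /K0 !mulr_ge0. Qed.

Lemma dot_crude (u : 'cV[R]_m) : dot u (H *m u) <= K0 * dot u u.
Proof.
apply: le_trans (dot_le _ _) _.
apply: (@le_trans _ _ (m%:R * `|u| * (m%:R * `|H| * `|u|))).
  by rewrite ler_wpM2l ?mulr_ge0 //; apply: mxn_mul.
apply: (@le_trans _ _ (K0 * `|u| ^+ 2)).
  by rewrite /K0 expr2 le_eqVlt; apply/orP; left; apply/eqP; ring.
by rewrite ler_wpM2l ?K0_ge0 // normsq_le_dot.
Qed.

Lemma HH_le (r : 'cV[R]_m) :
  dot (H *m r) (H *m r) <= K0 * dot r (H *m r).
Proof.
set c := dot (H *m r) (H *m r); set a := dot r (H *m r).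
have a0 : 0 <= a by apply: Hpsd.
have [c0|cn0] := eqVneq c 0; first by rewrite c0 mulr_ge0 ?K0_ge0.
have cpos : 0 < c by rewrite lt_def cn0 dot_ge0.
have cs : c ^+ 2 <= dot (H *m r) (H *m (H *m r)) * a.
  apply: cs_scalar; last exact: a0.
  move=> t; have := Hpsd (H *m r - t *: r); rewrite dot_quad -/c -/a.
  suff -> : dot (H *m r) (H *m (H *m r)) - 2 * c * t + a * t ^+ 2 =
     dot (H *m r) (H *m (H *m r)) - 2 * t * c + t ^+ 2 * a by [].
  ring.
have : c * c <= c * (K0 * a).
  apply: (@le_trans _ _ (dot (H *m r) (H *m (H *m r)) * a)).
    by rewrite -expr2.
  rewrite mulrA [c * K0]mulrC; apply: ler_wpM2r => //; exact: dot_crude.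
by rewrite ler_pM2l.
Qed.

End Sym.
Lemma ctaS {R : realType} {m n : nat} (H : 'M[R]_m) (D : 'M[R]_(n, m)) x0 r0 k :
  cta H D x0 r0 k.+1 =
  ((cta H D x0 r0 k).1 + alpha11 H (cta H D x0 r0 k).2 *: (D *m (cta H D x0 r0 k).2),
   F1 H (cta H D x0 r0 k).2).
Proof. by rewrite /=; case: (cta H D x0 r0 k). Qed.

Lemma cta_inv {R : realType} {m n : nat} (A : 'M[R]_(m, n)) (H : 'M[R]_m)
  (D : 'M[R]_(n, m)) x0 r0 k : A *m D = H ->
  A *m (cta H D x0 r0 k).1 + (cta H D x0 r0 k).2 = A *m x0 + r0.
Proof.
move=> AD; elim: k => [//|k IH]; rewrite ctaS /= -IH /F1.
rewrite mulmxDr -scalemxAr mulmxA AD.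
by rewrite -addrA; congr (_ + _); rewrite addrC subrK.
Qed.

Lemma cta_range {R : realType} {m n : nat} (A : 'M[R]_(m, n)) w0 r0 k :
  exists w, (cta (A *m A^T) A^T (A^T *m w0) r0 k).1 = A^T *m w.
Proof.
elim: k => [|k [w IH]]; first by exists w0.
rewrite ctaS /= IH; exists (w + alpha11 (A *m A^T) (cta (A *m A^T) A^T (A^T *m w0) r0 k).2 *: (cta (A *m A^T) A^T (A^T *m w0) r0 k).2).
by rewrite mulmxDr scalemxAr.
Qed.

Section Resid.
Context {R : realType} {m n : nat}.
Variable H : 'M[R]_m.
Hypothesis Hsym : H^T = H.
Hypothesis Hpsd : forall v : 'cV[R]_m, 0 <= dot v (H *m v).
Variables (D : 'M[R]_(n, m)) (x0 : 'cV[R]_n) (r0 : 'cV[R]_m).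
Let rr k := (cta H D x0 r0 k).2.
Hypothesis Hnz : forall k, H *m rr k != 0.

Lemma alphaE (r : 'cV[R]_m) :
  alpha11 H r = dot r (H *m r) / dot (H *m r) (H *m r).
Proof.
by rewrite /alpha11 /dot mulmxA trmx_mul Hsym !mulmxA.
Qed.

Lemma rr_step k :
  dot (rr k.+1) (rr k.+1) = dot (rr k) (rr k) -
    dot (rr k) (H *m rr k) ^+ 2 / dot (H *m rr k) (H *m rr k).
Proof.
rewrite /rr ctaS /= -/(rr k) /F1 alphaE.
have cn0 : dot (H *m rr k) (H *m rr k) != 0.
  by apply/eqP => /dot_eq0; apply/eqP; exact: Hnz.
rewrite dotBl !dotBr !dotZl !dotZr.
rewrite [dot (H *m rr k) (rr k)]dotC.
by field.
Qed.

Lemma rr_dec k : dot (rr k.+1) (rr k.+1) <= dot (rr k) (rr k).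
Proof.
rewrite rr_step gerBl divr_ge0 ?sqr_ge0 ?dot_ge0 //.
Qed.

Lemma rr_bound k : dot (rr k) (rr k) <= dot r0 r0.
Proof.
elim: k => [//|k IH]; exact: le_trans (rr_dec k) IH.
Qed.

Lemma rr_aH : (fun k => dot (rr k) (H *m rr k)) @ \oo --> (0:R).
Proof.
have t0 := decr_diff0 (fun k => dot (rr k) (rr k)) rr_dec (fun k => dot_ge0 (rr k)).
apply: (@cvg0_le _ R^o _ _ (K0 H)) t0 => k.
rewrite rr_step opprB addrC subrK ger0_norm ?Hpsd //.
set a := dot (rr k) (H *m rr k); set c := dot (H *m rr k) (H *m rr k).
have cpos : 0 < c.
  by rewrite lt_def dot_ge0 andbT; apply/eqP => /dot_eq0; apply/eqP; exact: Hnz.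
have := HH_le H Hsym Hpsd (rr k); rewrite -/a -/c => hc.
rewrite -(ler_pM2r cpos).
have -> : K0 H * (a ^+ 2 / c) * c = a * (K0 H * a).
  by field; rewrite gt_eqF.
have a0 : 0 <= a by apply: Hpsd.
by rewrite ler_wpM2l.
Qed.

Lemma rr_H : (fun k => H *m rr k) @ \oo --> (0 : 'cV[R]_m).
Proof.
apply: norm_cvg0; apply: cvg_sq0 => //.
apply: (@cvg0_le _ R^o _ _ (K0 H)) rr_aH => k.
rewrite ger0_norm ?sqr_ge0 //.
exact: le_trans (normsq_le_dot _) (HH_le H Hsym Hpsd _).
Qed.

End Resid.
Lemma cluster_sol {R : realType} {m n : nat} (A : 'M[R]_(m, n)) (b : 'cV[R]_m)
  (x : nat -> 'cV[R]_n) :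
  (fun k => A *m x k) @ \oo --> b ->
  forall p, cluster (x @ \oo) p -> A *m p = b.
Proof.
move=> /cvgrPdist_lt hx p hp.
set K : R := n%:R * `|A| + 1.
have K0 : 0 < K by rewrite /K ltr_wpDl // mulr_ge0.
have key : forall e, 0 < e -> `|A *m p - b| < e.
  move=> e e0.
  have e20 : 0 < e / 2 by rewrite divr_gt0.
  have := hp [set v | `|b - A *m v| < e / 2] (ball p (e / 2 / K)) (hx _ e20).
  case/(_ (nbhsx_ballx _ _ _))=> [|v [/= hv hb]]; first by rewrite divr_gt0.
  rewrite -ball_normE /ball_ /= in hb.
  have -> : A *m p - b = A *m (p - v) + (A *m v - b).
    by rewrite mulmxBr addrA subrK.
  apply: le_lt_trans (ler_normD _ _) _.
  rewrite distrC in hv.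
  have h1 : `|A *m (p - v)| < e / 2.
    apply: le_lt_trans (mxn_mul _ _) _.
    apply: (@le_lt_trans _ _ (K * `|p - v|)).
      by rewrite ler_wpM2r // /K lerDl.
    by rewrite mulrC -ltr_pdivlMr.
  by rewrite (splitr e) ltrD.
have [//|hne] := eqVneq (A *m p) b.
have hpos : 0 < `|A *m p - b| by rewrite normr_gt0 subr_eq0.
by have := key _ hpos; rewrite ltxx.
Qed.
Lemma eucl2_dot {R : realType} {m : nat} (v : 'cV[R]_m) : eucl2 v = dot v v.
Proof. by rewrite /eucl2 dotE; apply: eq_bigr => i _; rewrite expr2. Qed.

Lemma min_norm {R : realType} {m n : nat} (A : 'M[R]_(m, n)) b v :
  A *m (A^T *m v) = b -> is_min_norm_sol A b (A^T *m v).
Proof.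
move=> hv; split=> // y hy; rewrite !eucl2_dot.
set xs := A^T *m v; set d := y - xs.
have e : dot xs d = 0 by rewrite /xs dot_mx trmxK /d mulmxBr hy hv subrr dot0r.
have hyd : y = xs + d by rewrite /d addrC subrK.
clearbody d; rewrite hyd.
rewrite dotDl !dotDr (dotC d xs) e add0r addr0 lerDl.
exact: dot_ge0.
Qed.

Lemma AAT_range {R : realType} {m n : nat} (A : 'M[R]_(m, n)) (b : 'cV[R]_m) (y : 'cV[R]_n) :
  A *m y = b -> exists v, A *m (A^T *m v) = b.
Proof.
move=> hy.
have C0 : (A :&: kermx A^T)%MS = 0 :> 'M[R]_n.
  set C := (A :&: kermx A^T)%MS.
  have /submxP [D hD] : (C <= A)%MS by apply: capmxSl.
  have /sub_kermxP hK : (C <= kermx A^T)%MS by apply: capmxSr.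
  have hCC : C *m C^T = 0.
    by rewrite [X in _ *m X^T]hD trmx_mul mulmxA hK mul0mx.
  apply/matrixP => i j; rewrite mxE.
  have := congr1 (fun M : 'M[R]_n => M i i) hCC; rewrite !mxE => /eqP.
  rewrite psumr_eq0; last by move=> k _; rewrite mxE -expr2 sqr_ge0.
  move=> /allP /(_ j (mem_index_enum _)) /=; rewrite mxE -expr2 sqrf_eq0.
  by move/eqP.
have hr : \rank (A *m A^T) = \rank A^T.
  by have := mxrank_mul_ker A A^T; rewrite C0 mxrank0 addn0 mxrank_tr.
have sub : (A *m A^T <= A^T)%MS by apply: submxMl.
have heq : (A *m A^T == A^T)%MS.
  by rewrite -(mxrank_leqif_eq sub).2 hr.
have sub2 : (A^T <= A *m A^T)%MS by case/andP: heq.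
have hb : (b^T <= A *m A^T)%MS.
  by rewrite -hy trmx_mul; apply: submx_trans sub2; apply: submxMl.
case/submxP: hb => D hD.
exists D^T; rewrite mulmxA -[b]trmxK hD trmx_mul trmx_mul trmxK.
by [].
Qed.
Lemma norm_to0 {R : realType} {p q : nat} (f : nat -> 'M[R]_(p, q)) :
  f @ \oo --> (0 : 'M[R]_(p, q)) -> (fun k => `|f k|) @ \oo --> (0:R).
Proof. by move=> /norm_cvg0P. Qed.

Lemma sq_bound_cvg {R : realType} {p q : nat} (f : nat -> 'M[R]_(p, q))
  (g : nat -> R) (C : R) :
  (forall k, `|f k| ^+ 2 <= C * g k) -> g @ \oo --> (0:R) -> f @ \oo --> (0 : 'M[R]_(p, q)).
Proof.
move=> H hg; apply: norm_cvg0; apply: cvg_sq0 => //.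
apply: (@cvg0_le _ R^o _ _ C) hg => k.
by rewrite ger0_norm ?sqr_ge0.
Qed.

Lemma le_sq1 {R : realType} (a : R) : a <= a ^+ 2 + 1.
Proof. rewrite expr2; nra. Qed.

Lemma part3 {R : realType} {m n : nat} (A : 'M[R]_(m, n)) (b : 'cV[R]_m)
  (x : nat -> 'cV[R]_n) (r : nat -> 'cV[R]_m) :
  (forall k, A *m x k + r k = b) ->
  (fun k => A^T *m r k) @ \oo --> (0 : 'cV[R]_n) ->
  (exists y, A *m y = b) -> bounded_seq x ->
  r @ \oo --> (0 : 'cV[R]_m) /\
  (forall p : 'cV[R]_n, cluster (x @ \oo) p -> A *m p = b).
Proof.
move=> inv hAT [y hy] [M hM].
have hr : r @ \oo --> (0 : 'cV[R]_m).
  apply: (@sq_bound_cvg _ _ _ _ (fun k => `|A^T *m r k|) (n%:R * (`|y| + M))); last first.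
    exact: norm_to0.
  move=> k; apply: le_trans (normsq_le_dot _) _.
  have e : r k = A *m (y - x k).
    by rewrite mulmxBr hy -(inv k) addrC addKr.
  rewrite {1}e dot_mx; apply: le_trans (dot_le _ _) _.
  apply: ler_wpM2r => //; apply: ler_wpM2l => //.
  by apply: le_trans (ler_normB _ _) _; rewrite lerD2l.
split=> //; apply: cluster_sol.
have -> : (fun k => A *m x k) = (fun k => b - r k).
  by apply: funext => k; rewrite -(inv k) addrK.
by rewrite -[X in _ --> X]subr0; apply: cvgB => //; exact: cvg_cst.
Qed.

Lemma rank_AAT {R : realType} {m n : nat} (A : 'M[R]_(m, n)) :
  \rank (A *m A^T) = \rank A.
Proof.
have C0 : (A :&: kermx A^T)%MS = 0 :> 'M[R]_n.
  set C := (A :&: kermx A^T)%MS.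
  have /submxP [D hD] : (C <= A)%MS by apply: capmxSl.
  have /sub_kermxP hK : (C <= kermx A^T)%MS by apply: capmxSr.
  have hCC : C *m C^T = 0.
    by rewrite [X in _ *m X^T]hD trmx_mul mulmxA hK mul0mx.
  apply/matrixP => i j; rewrite mxE.
  have := congr1 (fun M : 'M[R]_n => M i i) hCC; rewrite !mxE => /eqP.
  rewrite psumr_eq0; last by move=> k _; rewrite mxE -expr2 sqr_ge0.
  move=> /allP /(_ j (mem_index_enum _)) /=; rewrite mxE -expr2 sqrf_eq0.
  by move/eqP.
by have := mxrank_mul_ker A A^T; rewrite C0 mxrank0 addn0.
Qed.

Lemma part4conv {R : realType} {m n : nat} (A : 'M[R]_(m, n)) (b : 'cV[R]_m)
  (x : nat -> 'cV[R]_n) (r : nat -> 'cV[R]_m) (w : nat -> 'cV[R]_m) (vs : 'cV[R]_m) :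
  (forall k, A *m x k + r k = b) -> A *m (A^T *m vs) = b ->
  (forall k, x k = A^T *m w k) -> bounded_seq w ->
  r @ \oo --> (0 : 'cV[R]_m) -> x @ \oo --> A^T *m vs.
Proof.
move=> inv hvs hw [M hM] hr; apply/subr_cvg0.
apply: (@sq_bound_cvg _ _ _ _ (fun k => `|r k|) (m%:R * (M + `|vs|))); last first.
  exact: norm_to0.
move=> k; apply: le_trans (normsq_le_dot _) _.
rewrite {1}hw -mulmxBr dot_mx trmxK mulmxBr hvs.
have -> : A *m x k - b = - r k by rewrite -(inv k) opprD addrA subrr add0r.
apply: le_trans (dot_le _ _) _; rewrite normrN.
apply: ler_wpM2r => //; apply: ler_wpM2l => //.
by apply: le_trans (ler_normB _ _) _; rewrite lerD2r.
Qed.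
Theorem mainTheorem6 (R : realType) :
  (* Case H = A A^T *)
  (forall (m n : nat) (A : 'M[R]_(m, n)) (b w0 : 'cV[R]_m),
    let x := fun k => (cta_AAT A b w0 k).1 in
    let r := fun k => (cta_AAT A b w0 k).2 in
    (forall k, (A *m A^T) *m r k != 0) ->
    (* (1) *)
    (\rank A = m ->
       exists xs, is_min_norm_sol A b xs /\ x @ \oo --> xs) /\
    (* (2) *)
    ((fun k => A^T *m r k) @ \oo --> (0 : 'cV[R]_n)) /\
    (* (3) *)
    ((exists y, A *m y = b) -> bounded_seq x ->
       r @ \oo --> (0 : 'cV[R]_m) /\
       (forall p : 'cV[R]_n, cluster (x @ \oo) p -> A *m p = b)) /\
    (* (4) *)
    ((exists y, A *m y = b) ->
       (forall k, exists w, x k = A^T *m w) /\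
       (forall w : nat -> 'cV[R]_m, (forall k, x k = A^T *m w k) ->
          bounded_seq w ->
          exists xs, is_min_norm_sol A b xs /\ x @ \oo --> xs))) /\
  (* Case H = A, A square symmetric positive semidefinite *)
  (forall (n : nat) (A : 'M[R]_n) (b w0 : 'cV[R]_n),
    psd_sym A ->
    let x := fun k => (cta_A A b w0 k).1 in
    let r := fun k => (cta_A A b w0 k).2 in
    (forall k, A *m r k != 0) ->
    (* (1) *)
    (\rank A = n -> exists xs : 'cV[R]_n, A *m xs = b /\ x @ \oo --> xs) /\
    (* (2) *)
    ((fun k => A^T *m r k) @ \oo --> (0 : 'cV[R]_n)) /\
    (* (3) *)
    ((exists y, A *m y = b) -> bounded_seq x ->
       r @ \oo --> (0 : 'cV[R]_n) /\
       (forall p : 'cV[R]_n, cluster (x @ \oo) p -> A *m p = b))).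
Proof.
split.
- move=> m n A b w0 x r Hnz.
  have Hsym : (A *m A^T)^T = A *m A^T by rewrite trmx_mul trmxK.
  have Hpsd : forall v : 'cV[R]_m, 0 <= dot v ((A *m A^T) *m v).
    by move=> v; rewrite -mulmxA dotC dot_mx; exact: dot_ge0.
  have inv : forall k, A *m x k + r k = b.
    by move=> k; rewrite /x /r /cta_AAT (@cta_inv _ _ _ A) // addrC subrK.
  have hrH : (fun k => (A *m A^T) *m r k) @ \oo --> (0 : 'cV[R]_m) :=
    rr_H _ Hsym Hpsd _ _ _ Hnz.
  have haH : (fun k => dot (r k) ((A *m A^T) *m r k)) @ \oo --> (0 : R) :=
    rr_aH _ Hsym Hpsd _ _ _ Hnz.
  have hrb : forall k, `|r k| <= dot (r 0%N) (r 0%N) + 1.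
    move=> k; apply: le_trans (le_sq1 _) _; rewrite lerD2r.
    apply: le_trans (normsq_le_dot _) _.
    exact: (rr_bound _ Hsym _ _ _ Hnz k).
  have hAT : (fun k => A^T *m r k) @ \oo --> (0 : 'cV[R]_n).
    apply: (@sq_bound_cvg _ _ _ _ (fun k => dot (r k) ((A *m A^T) *m r k)) 1) haH => k.
    rewrite mul1r; apply: le_trans (normsq_le_dot _) _.
    by rewrite -mulmxA [leRHS]dotC [leRHS]dot_mx.
  have P3 := part3 _ _ _ _ inv hAT.
  have P4a : forall k, exists w, x k = A^T *m w.
    by move=> k; rewrite /x /cta_AAT; apply: cta_range.
  split; last split; [| exact: hAT | split; [exact: P3 | ]].
  + move=> hrank.
    have hunit : A *m A^T \in unitmx.
      by rewrite -row_free_unit /row_free rank_AAT hrank.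
    set iH := invmx (A *m A^T).
    have hr0 : r @ \oo --> (0 : 'cV[R]_m).
      apply: (@cvg0_le _ _ _ (fun k => `|(A *m A^T) *m r k|) (m%:R * `|iH|)); last first.
        exact: norm_to0.
      move=> k; rewrite -{1}(mulKmx hunit (r k)) -/iH; exact: mxn_mul.
    set vs := iH *m b.
    have hvs : A *m (A^T *m vs) = b by rewrite mulmxA /vs /iH mulKVmx.
    exists (A^T *m vs); split; first exact: min_norm.
    apply/subr_cvg0.
    apply: (@cvg0_le _ _ _ (fun k => `|r k|) (m%:R * `|A^T| * (m%:R * `|iH|))); last first.
      exact: norm_to0.
    move=> k; have [w hw] := P4a k.
    have e : x k - A^T *m vs = - (A^T *m (iH *m r k)).
      have hw' : A *m (A^T *m w) = b - r k by rewrite -hw -(inv k) addrK.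
      rewrite hw -(mulKmx hunit w) -/iH -(mulmxA A) hw' /vs.
      by rewrite !mulmxBr addrAC subrr add0r.
    rewrite e normrN; apply: le_trans (mxn_mul _ _) _.
    rewrite -[leRHS]mulrA; apply: ler_wpM2l; first by rewrite mulr_ge0.
    exact: mxn_mul.
  + move=> hy; split; first exact: P4a.
    move=> w hw bw.
    have bx : bounded_seq x.
      case: bw => Mw hMw.
      set C := m%:R * Mw * (`|b| + (dot (r 0%N) (r 0%N) + 1)).
      exists (C + 1) => k; apply: le_trans (le_sq1 _) _; rewrite lerD2r.
      apply: le_trans (normsq_le_dot _) _.
      rewrite {1}hw dot_mx trmxK; apply: le_trans (dot_le _ _) _.
      rewrite /C; apply: ler_pM; rewrite ?mulr_ge0 //.
        by apply: ler_wpM2l.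
      have -> : A *m x k = b - r k by rewrite -(inv k) addrK.
      by apply: le_trans (ler_normB _ _) _; rewrite lerD2l.
    have hr0 := (P3 hy bx).1.
    case: hy => y hy; have [vs hvs] := AAT_range _ _ _ hy.
    exists (A^T *m vs); split; first exact: min_norm.
    exact: (part4conv _ _ _ _ _ _ inv hvs hw bw hr0).
- move=> n A b w0 [Asym Apsd] x r Hnz.
  have Hpsd : forall v : 'cV[R]_n, 0 <= dot v (A *m v).
    by move=> v; rewrite /dot mulmxA; apply: Apsd.
  have inv : forall k, A *m x k + r k = b.
    by move=> k; rewrite /x /r /cta_A (@cta_inv _ _ _ A) ?mulmx1 // addrC subrK.
  have hrH : (fun k => A *m r k) @ \oo --> (0 : 'cV[R]_n) :=
    rr_H _ Asym Hpsd _ _ _ Hnz.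
  have hAT : (fun k => A^T *m r k) @ \oo --> (0 : 'cV[R]_n) by rewrite Asym.
  split; last split; [| exact: hAT | exact: part3 _ _ _ _ inv hAT].
  move=> hrank.
  have hunit : A \in unitmx by rewrite -row_free_unit /row_free hrank.
  set iA := invmx A.
  have hr0 : r @ \oo --> (0 : 'cV[R]_n).
    apply: (@cvg0_le _ _ _ (fun k => `|A *m r k|) (n%:R * `|iA|)); last first.
      exact: norm_to0.
    move=> k; rewrite -{1}(mulKmx hunit (r k)) -/iA; exact: mxn_mul.
  exists (iA *m b); split; first by rewrite /iA mulKVmx.
  apply/subr_cvg0.
  apply: (@cvg0_le _ _ _ (fun k => `|r k|) (n%:R * `|iA|)); last first.
    exact: norm_to0.
  move=> k.
  have e : x k - iA *m b = - (iA *m r k).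
    have hxk : A *m x k = b - r k by rewrite -(inv k) addrK.
    rewrite -{1}(mulKmx hunit (x k)) -/iA hxk.
    by rewrite !mulmxBr addrAC subrr add0r.
  rewrite e normrN; exact: mxn_mul.
Qed.
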